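(* Let $m\ge 2$, let $C=uRM(m)$ (defined in the context), and fix any choice of base qubits $b_0,\dots,b_m$ for $C$. Then the parity labels $L(q)$ of the $2^m$ qubits $q$ are exactly all the odd-cardinality subsets of $\{0,1,\dots,m\}$, each such subset being the label of exactly one qubit.
   Context: Let $a=\lceil m/2\rceil$, $b=\lfloor m/2\rfloor$. Place $2^m$ bits (qubits) on a grid with $2^b$ rows and $2^a$ columns, positions $(i,j)$, row $1$ on top, column $1$ leftmost. Bulk checks: for $1\le i<2^b$, $1\le j<2^a$, the set $\{(i,j),(i+1,j),(i,j+1),(i+1,j+1)\}$. Boundary checks: for a line of $L=2^n$ positions $1,\dots,L$, each $s\in\{1,\dots,n-1\}$, $w=2^s$, and integer $t$ with $-L/(2w)+1\le t\le L/(2w)-1$, $S(w,t)=\{L/2-w/2+wt,\ L/2-w/2+wt+1,\ L/2+w/2+wt,\ L/2+w/2+wt+1\}$; these with $n=a$ on the top row ($j\mapsto(1,j)$) and with $n=b$ on the leftmost column ($i\mapsto(i,1)$). $C=uRM(m)$ is the set of $x\in\mathbb{F}_2^{2^m}$ with even sum over every check; it has dimension $m+1$. Base qubits and parity labels: base qubits are $m+1$ positions $b_0,\dots,b_m$ such that the map $C\to\mathbb{F}_2^{m+1}$, $x\mapsto(x_{b_0},\dots,x_{b_m})$ is a bijection. For each qubit $q$, its parity label is the unique subset $L(q)\subseteq\{0,\dots,m\}$ such that $x_q=\sum_{i\in L(q)}x_{b_i}$ for all $x\in C$. *)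

(* Defs.v *)
From mathcomp Require Import all_boot all_order all_algebra.
Set Implicit Arguments. Unset Strict Implicit. Unset Printing Implicit Defensive.
Import Order.TTheory GRing.Theory Num.Theory.

Definition acols (m : nat) : nat := uphalf m.
Definition brows (m : nat) : nat := m./2.

(* Qubit positions: (row, column), 0-indexed; row i (0-based) is row i+1 of
   the paper, column j (0-based) is column j+1. Row 1 is the top row. *)
Definition pos (m : nat) : finType :=
  ('I_(2 ^ brows m) * 'I_(2 ^ acols m))%type.

(* The four 1-indexed positions of the boundary check S(w,t) on a line of
   L = 2^n positions, with w = 2^s. *)
Definition Sbd (n s : nat) (t : int) : seq int :=
  let L := (2 ^ n)%N in let w := (2 ^ s)%N in
  [:: ((L %/ 2)%N%:Z - (w %/ 2)%N%:Z + w%:Z * t)%R;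
      ((L %/ 2)%N%:Z - (w %/ 2)%N%:Z + w%:Z * t + 1)%R;
      ((L %/ 2)%N%:Z + (w %/ 2)%N%:Z + w%:Z * t)%R;
      ((L %/ 2)%N%:Z + (w %/ 2)%N%:Z + w%:Z * t + 1)%R].

Definition bd_index (n s : nat) (t : int) : Prop :=
  (1 <= s <= n - 1)%N /\
  (- ((2 ^ n) %/ (2 * 2 ^ s))%N%:Z + 1 <= t <= ((2 ^ n) %/ (2 * 2 ^ s))%N%:Z - 1)%R.

Definition is_check (m : nat) (S : {set pos m}) : Prop :=
  (exists i j : nat, [/\ (1 <= i < 2 ^ brows m)%N, (1 <= j < 2 ^ acols m)%N &
      S = [set p : pos m | ((val p.1).+1 \in [:: i; i.+1])
                           && ((val p.2).+1 \in [:: j; j.+1])]])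
  \/ (exists (s : nat) (t : int), bd_index (acols m) s t /\
      S = [set p : pos m | (val p.1 == 0%N)
                           && (Posz (val p.2).+1 \in Sbd (acols m) s t)])
  \/ (exists (s : nat) (t : int), bd_index (brows m) s t /\
      S = [set p : pos m | (val p.2 == 0%N)
                           && (Posz (val p.1).+1 \in Sbd (brows m) s t)]).

Definition word (m : nat) := {ffun pos m -> bool}.

Definition in_uRM (m : nat) (x : word m) : Prop :=
  forall S : {set pos m}, @is_check m S -> ~~ odd #|[set p in S | x p]|.

Definition base_qubits (m : nat) (bs : 'I_m.+1 -> pos m) : Prop :=
  forall y : {ffun 'I_m.+1 -> bool},
    exists! x : word m, @in_uRM m x /\ (forall k, x (bs k) = y k).

Definition is_parity_label (m : nat) (bs : 'I_m.+1 -> pos m) (q : pos m)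
    (L : {set 'I_m.+1}) : Prop :=
  forall x : word m, @in_uRM m x -> x q = \big[addb/false]_(i in L) x (bs i).

(* Main.v *)
Require Import Defs.
From mathcomp Require Import all_boot all_order all_algebra.
From mathcomp Require Import zify ring.
From Stdlib Require Import Classical ClassicalEpsilon.
Set Warnings "-all".
Import GRing.Theory Num.Theory.

Lemma big_andbl (I : finType) (a : bool) (G : I -> bool) :
  \big[addb/false]_(i : I) (a && G i) = a && \big[addb/false]_i G i.
Proof. by case: a => //=; rewrite big1. Qed.

Lemma line_sum N (s : seq nat) (F : nat -> bool) : uniq s -> all (fun v => 0 < v <= N) s ->
  \big[addb/false]_(j < N) ((j.+1 \in s) && F j) = \big[addb/false]_(v <- s) F v.-1.
Proof.
elim: s => [|v s IH] /=.
  by move=> _ _; rewrite big_nil big1.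
move=> /andP[vs us] /andP[/andP[v0 vN] As].
rewrite big_cons -IH //.
rewrite (eq_bigr (fun j : 'I_N => ((j.+1 == v) && F j) (+) ((j.+1 \in s) && F j))); last first.
  move=> j _; rewrite in_cons; case E: (j.+1 == v) => //=.
  by move/eqP: E => E; rewrite -E in vs; rewrite (negbTE vs) /= addbF.
rewrite big_split /=; congr (_ (+) _).
have jv : v.-1 < N by lia.
rewrite (bigD1 (Ordinal jv)) //= prednK // eqxx /= big1 ?addbF //.
move=> j ne; case E: (j.+1 == v) => //=; move: ne; by rewrite -val_eqE /= -(eqP E) /= eqxx.
Qed.

Lemma first_row N (G : nat -> bool) : 0 < N ->
  \big[addb/false]_(i < N) ((i == 0%N :> nat) && G i) = G 0.
Proof.
case: N => // N _; rewrite big_ord_recl /= big1 ?addbF // => i _.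
Qed.

Lemma odd_card_big (T : finType) (S : {set T}) (x : T -> bool) :
  odd #|[set p in S | x p]| = \big[addb/false]_(p : T) ((p \in S) && x p).
Proof.
rewrite -sum1_card (big_morph odd oddD (erefl : odd 0 = false)) big_mkcond /=.
by apply: eq_bigr => p _; rewrite inE; case: (_ && _).
Qed.

Lemma big_pair (A B : finType) (G : A * B -> bool) :
  \big[addb/false]_(p : A * B) G p = \big[addb/false]_(i : A) \big[addb/false]_(j : B) G (i,j).
Proof. by rewrite pair_big; apply: eq_bigr => -[]. Qed.


Lemma bd_nat n s t : bd_index n s t -> exists e u,
  2^e*(2*u+3) < 2^n /\ Sbd n s t = map Posz [:: 2^e*(2*u+1); (2^e*(2*u+1)).+1; 2^e*(2*u+3); (2^e*(2*u+3)).+1].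
Proof.
move=> [/andP [s1 sn] /andP[tl tu]].
have hs : 2^s = 2 * 2^s.-1 by rewrite -expnS prednK.
have hn : 2^n = 2^s.-1 * 4 * 2^(n - s.+1).
  by rewrite -[4]/(2^2) -!expnD; congr (expn 2 _); lia.
move: tl tu; rewrite /Sbd hn hs.
have he : 0 < 2^s.-1 by rewrite expn_gt0.
move: he; set h := 2^s.-1; set M := 2^(n - s.+1) => h0.
have -> : h * 4 * M %/ (2 * (2 * h)) = M.
  by rewrite (_ : h*4*M = (2*(2*h))*M) ?mulKn ?muln_gt0 //; nia.
have -> : h * 4 * M %/ 2 = h * 2 * M.
  by rewrite (_ : h*4*M = 2*(h*2*M)) ?mulKn //; nia.
have -> : 2 * h %/ 2 = h by rewrite mulKn.
move=> tl tu.
have [u hu] : exists u : nat, t = (u%:Z - M%:Z + 1)%R.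
  exists `|(t + M%:Z - 1)%R|%N. lia.
subst t. exists s.-1, u. split.
  nia.
rewrite /=. congr [:: _; _; _; _]; lia.
Qed.

Lemma predMD a b : 0 < a -> 0 < b -> (a * b).-1 = b.-1 * a + a.-1.
Proof. by case: a => // a _; case: b => // b _; by rewrite mulnS addSn /= mulnC addnC. Qed.

Lemma flip e s K : odd K ->
  odd ((2^e*K).-1 %/ 2^s) (+) odd (2^e*K %/ 2^s) = (s <= e).
Proof.
move=> oK.
have pe : 0 < 2^e by rewrite expn_gt0.
have ps : 0 < 2^s by rewrite expn_gt0.
have K0 : 0 < K by case: K oK.
case: (leqP s e) => hse.
- have -> : 2^e * K = 2^s * (2^(e-s) * K) by rewrite mulnA -expnD subnKC.
  have X0 : 0 < 2^(e-s) * K by rewrite muln_gt0 expn_gt0 /=.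
  move: X0; set X := 2^(e-s) * K => X0.
  rewrite mulKn // predMD // divnMDl // divn_small ?addn0; last by case: (2^s) ps.
  by case: X X0 => // X _ /=; rewrite addbN addbb.
- have [r ->] : exists r, s = e + r.+1 by (exists (s - e - 1); lia).
  rewrite expnD !divnMA predMD // divnMDl // [(2^e).-1 %/ _]divn_small ?addn0; last by case: (2^e) pe.
  rewrite mulKn // expnS !divnMA.
  have -> : K.-1 %/ 2 = K %/ 2.
    have [k ->] : exists k, K = k.*2.+1 by exists K./2; rewrite -[K in LHS]odd_double_half oK.
    lia.
  by rewrite addbb.
Qed.

Definition good (c : nat -> bool) := forall e K K', odd K -> odd K' ->
  c (2^e*K).-1 (+) c (2^e*K) = c (2^e*K').-1 (+) c (2^e*K').

Definition sepw m (r c : nat -> bool) : word m := [ffun p => r (val p.1) (+) c (val p.2)].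

Lemma Posz_inj : injective Posz. Proof. by move=> a b []. Qed.

Lemma sep_in m r c : good r -> good c -> in_uRM (sepw m r c).
Proof.
move=> gr gc S [[i [j [/andP[i1 iN] /andP[j1 jN] ->]]] | [[s [t [hb ->]]] | [s [t [hb ->]]]]];
  rewrite odd_card_big big_pair.
- under eq_bigr => i' _ do under eq_bigr => j' _ do rewrite inE ffunE /= -andbA.
  under eq_bigr => i' _ do rewrite big_andbl.
  rewrite (line_sum _ _ (fun n => \big[addb/false]_(j0 < 2 ^ acols m) ((j0.+1 \in [:: j; j.+1]) && (r n (+) c j0)))); last first.
    by rewrite /= i1; lia.
    by rewrite /= !inE; lia.
  have u2 : uniq [:: j; j.+1] by rewrite /= !inE; lia.
  have a2 : all (fun v => 0 < v <= 2 ^ acols m) [:: j; j.+1] by rewrite /= j1; lia.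
  rewrite !big_cons big_nil /= (line_sum _ _ (fun n => r i.-1 (+) c n)) //
    (line_sum _ _ (fun n => r i (+) c n)) // !big_cons !big_nil /=.
  by case: (r i.-1); case: (r i); case: (c j.-1); case: (c j).
- have [e [u [hlt ->]]] := bd_nat _ _ _ hb.
  set l := [:: _; _; _; _].
  have he : 0 < 2^e by rewrite expn_gt0.
  have ul : uniq l by rewrite /l /= !inE; nia.
  have al : all (fun v => 0 < v <= 2 ^ acols m) l by rewrite /l /=; nia.
  under eq_bigr => i' _ do under eq_bigr => j' _ do rewrite in_set ffunE (mem_map Posz_inj) -andbA.
  under eq_bigr => i' _ do rewrite big_andbl.
  rewrite (first_row _ (fun n => \big[addb/false]_(j0 < 2^acols m) ((j0.+1 \in l) && (r n (+) c j0)))); last by rewrite expn_gt0.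
  rewrite (line_sum _ _ (fun n => r 0 (+) c n)) // /l !big_cons big_nil /=.
  have o1 : odd (2*u+1) by rewrite oddD oddM.
  have o3 : odd (2*u+3) by rewrite oddD oddM.
  have := gc e _ _ o1 o3.
  by case: (r 0); case: (c (2 ^ e * (2 * u + 1)).-1); case: (c (2 ^ e * (2 * u + 1))); case: (c (2 ^ e * (2 * u + 3)).-1); case: (c (2 ^ e * (2 * u + 3))).
- have [e [u [hlt ->]]] := bd_nat _ _ _ hb.
  set l := [:: _; _; _; _].
  have he : 0 < 2^e by rewrite expn_gt0.
  have ul : uniq l by rewrite /l /= !inE; nia.
  have al : all (fun v => 0 < v <= 2 ^ brows m) l by rewrite /l /=; nia.
  under eq_bigr => i' _ do under eq_bigr => j' _ do rewrite in_set ffunE (mem_map Posz_inj) -andbA.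
  rewrite (eq_bigr (fun i' : 'I_(2^brows m) => (i'.+1 \in l) && (r i' (+) c 0))); last first.
    by move=> i' _; rewrite (first_row _ (fun n => (i'.+1 \in l) && (r i' (+) c n))) // expn_gt0.
  rewrite (line_sum _ _ (fun n => r n (+) c 0)) // /l !big_cons big_nil /=.
  have o1 : odd (2*u+1) by rewrite oddD oddM.
  have o3 : odd (2*u+3) by rewrite oddD oddM.
  have := gr e _ _ o1 o3.
  by case: (c 0); case: (r (2 ^ e * (2 * u + 1)).-1); case: (r (2 ^ e * (2 * u + 1))); case: (r (2 ^ e * (2 * u + 3)).-1); case: (r (2 ^ e * (2 * u + 3))).
Qed.

Lemma good_const b : good (fun _ => b).
Proof. by move=> *; rewrite addbb. Qed.

Lemma good_bit s : good (fun j => odd (j %/ 2^s)).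
Proof. by move=> e K K' oK oK'; rewrite !flip. Qed.

Lemma uRM_xor m (x y : word m) : in_uRM x -> in_uRM y -> in_uRM [ffun p => x p (+) y p].
Proof.
move=> hx hy S hS; rewrite odd_card_big.
rewrite (eq_bigr (fun p => ((p \in S) && x p) (+) ((p \in S) && y p))); last first.
  by move=> p _; rewrite ffunE; case: (p \in S).
rewrite big_split -!odd_card_big /=.
by move: (hx S hS) (hy S hS); case: (odd _); case: (odd _).
Qed.

Lemma bits_eq k a b : a < 2^k -> b < 2^k ->
  (forall s, odd (a %/ 2^s) = odd (b %/ 2^s)) -> a = b.
Proof.
elim: k a b => [|k IH] a b.
  by rewrite expn0 !ltnS !leqn0 => /eqP-> /eqP->.
move=> ha hb h.
have h0 := h 0; rewrite expn0 !divn1 in h0.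
have hh : a./2 = b./2.
  apply: IH.
  - by rewrite -divn2 ltn_divLR // -expnSr.
  - by rewrite -divn2 ltn_divLR // -expnSr.
  by move=> s; have := h s.+1; rewrite expnS !divnMA !divn2.
by rewrite -(odd_double_half a) -(odd_double_half b) h0 hh.
Qed.

Lemma bits_neq k a b : a < 2^k -> b < 2^k -> a <> b ->
  exists s, odd (a %/ 2^s) <> odd (b %/ 2^s).
Proof.
move=> ha hb hne; apply: not_all_ex_not => H.
by apply: hne; apply: (bits_eq _ _ _ ha hb) => s; apply: NNPP.
Qed.

Lemma big_eqk n (L : {set 'I_n}) k :
  \big[addb/false]_(i in L) (i == k) = (k \in L).
Proof.
rewrite big_mkcond (bigD1 k) //= eqxx big1 ?addbF; first by case: (k \in L).
by move=> i /negbTE ->; case: (i \in L).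
Qed.

Lemma big_true n (L : {set 'I_n}) : \big[addb/false]_(i in L) true = odd #|L|.
Proof. by rewrite -sum1_card (big_morph odd oddD (erefl : odd 0 = false)). Qed.

Definition tog n (L : {set 'I_n.+1}) : {set 'I_n.+1} :=
  if ord0 \in L then L :\ ord0 else ord0 |: L.

Lemma togK n : involutive (@tog n).
Proof.
move=> L; rewrite {2}/tog; case: ifP => h; rewrite /tog.
  by rewrite !inE eqxx /= setD1K.
by rewrite !inE eqxx /= setU1K ?h.
Qed.

Lemma tog_odd n L : odd #|@tog n L| = ~~ odd #|L|.
Proof.
rewrite /tog; case: ifP => h.
  by rewrite [in RHS](cardsD1 ord0) h /= negbK.
by rewrite cardsU1 h.
Qed.

Lemma card_odd n : #|[set L : {set 'I_n.+1} | odd #|L|]| = 2^n.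
Proof.
set O := [set L : {set 'I_n.+1} | odd #|L|].
have le1 : forall b, #|[set L : {set 'I_n.+1} | odd #|L| == b]| <= #|[set L : {set 'I_n.+1} | odd #|L| == ~~ b]|.
  move=> b; rewrite -(card_imset (mem [set L : {set 'I_n.+1} | odd #|L| == b]) (can_inj (@togK n))).
  apply: subset_leq_card; apply/subsetP => X /imsetP[L]; rewrite !inE => /eqP hL ->.
  by rewrite tog_odd hL.
have e1 : #|O| = #|~: O|.
  apply/eqP; rewrite eqn_leq.
  have -> : ~: O = [set L : {set 'I_n.+1} | odd #|L| == false].
    by apply/setP => L; rewrite !inE; case: (odd _).
  have -> : O = [set L : {set 'I_n.+1} | odd #|L| == true].
    by apply/setP => L; rewrite !inE; case: (odd _).
  by rewrite (le1 true) (le1 false).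
have := cardsC O; rewrite -e1 (_ : #|{set 'I_n.+1}| = 2^n.+1); first by rewrite expnS; lia.
by rewrite -cardsT -powersetT card_powerset cardsT card_ord.
Qed.

Theorem lemma2 (m : nat) (bs : 'I_m.+1 -> pos m) :
  (2 <= m)%N -> base_qubits bs ->
  [/\ (forall q : pos m, exists! L : {set 'I_m.+1}, is_parity_label bs q L),
      (forall (q : pos m) (L : {set 'I_m.+1}), is_parity_label bs q L -> odd #|L|)
    & (forall L : {set 'I_m.+1}, odd #|L| ->
         exists! q : pos m, is_parity_label bs q L)].
Proof.
move=> Hm Hb.
pose dec (y : {ffun 'I_m.+1 -> bool}) : word m :=
  proj1_sig (constructive_indefinite_description _ (Hb y)).
have decP y : (in_uRM (dec y) /\ forall k, dec y (bs k) = y k) /\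
   forall x, in_uRM x /\ (forall k, x (bs k) = y k) -> dec y = x.
  exact: (proj2_sig (constructive_indefinite_description _ (Hb y))).
clearbody dec.
have decIn y : in_uRM (dec y) by case: (decP y) => [[]].
have decB y k : dec y (bs k) = y k by case: (decP y) => [[_ ->]].
have decU (y : {ffun 'I_m.+1 -> bool}) x : in_uRM x -> (forall k, x (bs k) = y k) -> x = dec y.
  by move=> hx hk; case: (decP y) => _ h; rewrite (h x).
have decC x : in_uRM x -> x = dec [ffun k => x (bs k)].
  by move=> hx; apply: decU => // k; rewrite ffunE.
have decX (y1 y2 : {ffun 'I_m.+1 -> bool}) : dec [ffun k => y1 k (+) y2 k] = [ffun p => dec y1 p (+) dec y2 p].
  by apply/esym/decU; [exact: uRM_xor | move=> k; rewrite !ffunE !decB].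
have dec0 (y : {ffun 'I_m.+1 -> bool}) : (forall k, y k = false) -> forall p, dec y p = false.
  move=> hy p; have hx := sep_in m _ _ (good_const false) (good_const false).
  rewrite -(decU y _ hx); first by rewrite ffunE.
  by move=> k; rewrite hy ffunE.
pose e k := [ffun i : 'I_m.+1 => i == k].
have span (y : {ffun 'I_m.+1 -> bool}) q : dec y q = \big[addb/false]_(i <- enum 'I_m.+1) (y i && dec (e i) q).
  suff H : forall r, uniq r -> dec [ffun k => (k \in r) && y k] q = \big[addb/false]_(i <- r) (y i && dec (e i) q).
    rewrite -(H _ (enum_uniq _)); congr (dec _ q); apply/ffunP => k; by rewrite ffunE mem_enum inE.
  elim=> [|i r IH] /=.
    by move=> _; rewrite big_nil dec0 // => k; rewrite ffunE.
  move=> /andP[ni ur]; rewrite big_cons -IH //.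
  have -> : [ffun k => (k \in i :: r) && y k] =
     [ffun k => [ffun k => y i && (k == i)] k (+) [ffun k => (k \in r) && y k] k].
    apply/ffunP => k; rewrite !ffunE in_cons.
    case: (eqVneq k i) => [->|] /=; last by rewrite andbF.
    by rewrite (negbTE ni) andbT addbF.
  rewrite decX ffunE; congr (_ (+) _).
  case: (y i) => /=; last by rewrite dec0 // => k; rewrite ffunE.
  by congr (dec _ q); apply/ffunP => k; rewrite !ffunE.
pose lab (q : pos m) := [set k | dec (e k) q].
have labP q : is_parity_label bs q (lab q).
  move=> x hx; rewrite {1}(decC x hx) span big_enum /= big_mkcond [RHS]big_mkcond /=.
  apply: eq_bigr => i _; rewrite !inE ffunE.
  by case: (x (bs i)); case: (dec (e i) q).
have labU q L : is_parity_label bs q L -> L = lab q.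
  move=> hL; apply/setP => k; rewrite inE.
  have := hL (dec (e k)) (decIn _).
  rewrite (eq_bigr (fun i => i == k)) ?big_eqk; first by move->.
  by move=> i _; rewrite decB ffunE.
have labodd q L : is_parity_label bs q L -> odd #|L|.
  move=> hL; have := hL _ (sep_in m _ _ (good_const true) (good_const false)).
  by rewrite ffunE /= (eq_bigr (fun _ => true)) ?big_true // => i _; rewrite ffunE.
have key q q' x : lab q = lab q' -> in_uRM x -> x q = x q'.
  by move=> h hx; rewrite (labP q x hx) (labP q' x hx) h.
have labI : injective lab.
  move=> [i j] [i' j'] h.
  case: (eqVneq (val i) (val i')) => hi; case: (eqVneq (val j) (val j')) => hj.
  - by congr pair; apply: val_inj.
  - have [s hs] := bits_neq _ _ _ (ltn_ord j) (ltn_ord j') (elimN eqP hj).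
    have := key _ _ _ h (sep_in m _ _ (good_const false) (good_bit s)).
    by rewrite !ffunE /=.
  - have [s hs] := bits_neq _ _ _ (ltn_ord i) (ltn_ord i') (elimN eqP hi).
    have := key _ _ _ h (sep_in m _ _ (good_bit s) (good_const false)).
    by rewrite !ffunE /= !addbF.
  - have [s hs] := bits_neq _ _ _ (ltn_ord i) (ltn_ord i') (elimN eqP hi).
    have := key _ _ _ h (sep_in m _ _ (good_bit s) (good_const false)).
    by rewrite !ffunE /= !addbF.
split.
- move=> q; exists (lab q); split; first exact: labP.
  by move=> L hL; rewrite (labU _ _ hL).
- exact: labodd.
move=> L oL.
have himg : [set lab q | q : pos m] = [set L : {set 'I_m.+1} | odd #|L|].
  apply/eqP; rewrite eqEcard card_imset // card_odd; apply/andP; split.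
    by apply/subsetP => _ /imsetP[q _ ->]; rewrite inE; exact: labodd (labP q).
  rewrite cardT /= -cardE card_prod !card_ord -expnD /brows /acols uphalf_half.
  by rewrite -{1}(odd_double_half m) -addnn addnCA.
have : L \in [set lab q | q : pos m] by rewrite himg inE.
case/imsetP => q _ ->; exists q; split; first exact: labP.
by move=> q' hq'; apply: labI; rewrite (labU _ _ hq').
Qed.
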